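(* The regular module $\mathbb{M}_2$ is injective as a bigraded $\mathbb{M}_2$-module (in the category of bigraded $\mathbb{M}_2$-modules and bidegree-preserving homomorphisms).
   Context: $\mathbb{M}_2$ is the bigraded commutative $\mathbb{F}_2$-algebra with $\mathbb{F}_2$-basis the elements $\rho^m\tau^n$ ($m,n\ge0$) in bidegree $(m,m+n)$ and $\frac{\theta}{\rho^m\tau^n}$ ($m,n\ge 0$) in bidegree $(-m,-2-m-n)$; multiplication: $\rho^a\tau^b\cdot\rho^c\tau^d=\rho^{a+c}\tau^{b+d}$, $\rho^a\tau^b\cdot\frac{\theta}{\rho^c\tau^d}=\frac{\theta}{\rho^{c-a}\tau^{d-b}}$ if $a\le c,b\le d$ and $0$ otherwise, and the product of two elements of the form $\frac{\theta}{\rho^c\tau^d}$ is $0$. (It is $H^{*,*}(pt;\underline{\mathbb{F}_2})$.) *)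

(* Defs.v *)
From HB Require Import structures.
From mathcomp Require Import all_boot all_order all_algebra.
Set Implicit Arguments. Unset Strict Implicit. Unset Printing Implicit Defensive.
Import Order.TTheory GRing.Theory Num.Theory.
Local Open Scope ring_scope.

(** The F_2-basis of M_2 consists of
  - rho^m tau^n       (m,n >= 0) in bidegree (m, m+n), and
  - theta/(rho^m tau^n) (m,n >= 0) in bidegree (-m, -2-m-n).
  Hence the bidegree (p,q) contains exactly one basis element if
  [posD p q] (p >= 0, q >= p : it is rho^p tau^(q-p)) or
  [negD p q] (p <= 0, q <= p - 2 : it is theta/(rho^(-p) tau^(p-2-q))),
  and none otherwise (the two conditions are disjoint).  *)

Definition posD (p q : int) : bool := (0 <= p) && (p <= q).
Definition negD (p q : int) : bool := (p <= 0) && (q <= p - 2).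

Definition dimM2 (p q : int) : nat := (posD p q || negD p q)%N.

(** The piece of M_2 in bidegree (p,q): the F_2-vector space
    F_2^(dimM2 p q); when it is 1-dimensional the basis element
    (the monomial of that bidegree) is the row vector [const_mx 1]. *)
Definition M2 (p q : int) : lmodType 'F_2 := 'rV['F_2]_(dimM2 p q).

(** coefficient of a homogeneous element on the basis monomial of its
    bidegree (0 if the bidegree is empty) *)
Definition coefM2 (p q : int) (x : M2 p q) : 'F_2 := \sum_i x 0 i.

(** The product of the basis monomials in bidegrees (a,b) and (p,q) is the
    basis monomial of bidegree (a+p,b+q) exactly when [prodnz a b p q]:
    - rho^a tau^b * rho^c tau^d = rho^(a+c) tau^(b+d) (always nonzero);
    - rho^a tau^b * theta/(rho^c tau^d) = theta/(rho^(c-a) tau^(d-b)) if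
      a <= c and b <= d, which happens exactly when the target bidegree is
      a theta-bidegree, and 0 otherwise;
    - the product of two theta-monomials is 0. *)
Definition prodnz (a b p q : int) : bool :=
  [|| posD a b && posD p q,
      posD a b && negD p q && negD (a + p) (b + q)
    | negD a b && posD p q && negD (a + p) (b + q)].

Definition mulM2 (a b p q : int) (x : M2 a b) (y : M2 p q) : M2 (a + p) (b + q) :=
  const_mx (if prodnz a b p q then coefM2 x * coefM2 y else 0).

Definition oneM2 : M2 0 0 := const_mx 1.

Definition act_type (M : int -> int -> lmodType 'F_2) :=
  forall a b p q : int, M2 a b -> M p q -> M (a + p) (b + q).

Definition castM (M : int -> int -> Type) (p q p' q' : int)
  (e1 : p = p') (e2 : q = q') (x : M p q) : M p' q' :=
  match e1 in _ = r, e2 in _ = s return M r s with erefl, erefl => x end.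

Definition bgmod_axioms (M : int -> int -> lmodType 'F_2) (act : act_type M) : Prop :=
  (forall a b p q (r1 r2 : M2 a b) (m : M p q),
          act a b p q (r1 + r2) m = act a b p q r1 m + act a b p q r2 m) /\
      (forall a b p q (r : M2 a b) (m1 m2 : M p q),
          act a b p q r (m1 + m2) = act a b p q r m1 + act a b p q r m2) /\
      (forall a b p q (k : 'F_2) (r : M2 a b) (m : M p q),
          act a b p q (k *: r) m = k *: act a b p q r m) /\
      (forall a b p q (k : 'F_2) (r : M2 a b) (m : M p q),
          act a b p q r (k *: m) = k *: act a b p q r m) /\
      (forall p q (m : M p q),
          act 0 0 p q oneM2 m = castM (M:=M) (esym (add0r p)) (esym (add0r q)) m) /\
      (forall a b c d p q (r : M2 a b) (s : M2 c d) (m : M p q),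
          act a b (c + p) (d + q) r (act c d p q s m)
          = castM (M:=M) (esym (addrA a c p)) (esym (addrA b d q))
                  (act (a + c) (b + d) p q (mulM2 r s) m)).

Record bgmod := BGMod {
  bg_carrier :> int -> int -> lmodType 'F_2;
  bg_act : act_type bg_carrier;
  bg_axioms : bgmod_axioms bg_act }.
Arguments bg_act : clear implicits.

Definition is_bghom (M : int -> int -> lmodType 'F_2) (actM : act_type M)
  (N : int -> int -> lmodType 'F_2) (actN : act_type N)
  (f : forall p q, M p q -> N p q) : Prop :=
  (forall p q (k : 'F_2) (x y : M p q), f p q (k *: x + y) = k *: f p q x + f p q y)
  /\ (forall a b p q (r : M2 a b) (m : M p q),
        f (a + p) (b + q) (actM a b p q r m) = actN a b p q r (f p q m)).

Definition bg_injective (N : int -> int -> lmodType 'F_2) (actN : act_type N) : Prop :=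
  forall (A B : bgmod) (i : forall p q, A p q -> B p q)
         (f : forall p q, A p q -> N p q),
    is_bghom (bg_act A) (bg_act B) i ->
    (forall p q, injective (i p q)) ->
    is_bghom (bg_act A) actN f ->
    exists g : forall p q, B p q -> N p q,
      is_bghom (bg_act B) actN g /\ (forall p q (x : A p q), g p q (i p q x) = f p q x).

Definition M2act : act_type M2 := mulM2.

(* Main.v *)
Require Import Defs.
From HB Require Import structures.
From mathcomp Require Import all_boot all_order all_algebra.
From mathcomp Require Import zify boolp classical_sets.
Set Implicit Arguments. Unset Strict Implicit. Unset Printing Implicit Defensive.
Import GRing.Theory Num.Theory.
Local Open Scope ring_scope.
Local Open Scope classical_set_scope.

Lemma F2_cases (k : 'F_2) : k = 0 \/ k = 1.
Proof.
case: k => [[|[|n]] Hn]. left. apply/eqP. done. right; apply/eqP; done. done.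
Qed.

Lemma F2_add_self (V : lmodType 'F_2) (v : V) : v + v = 0.
Proof. have h : (1 + 1 : 'F_2) = 0 by apply/eqP.
by rewrite -{1}[v]scale1r -{2}[v]scale1r -scalerDl h scale0r. Qed.

Lemma F2_add_selfk (k : 'F_2) : k + k = 0.
Proof. by case: (F2_cases k) => ->; [rewrite addr0 | apply/eqP]. Qed.

Section Ext.
Variables (V W : lmodType 'F_2) (i : W -> V) (lA : W -> 'F_2).
Hypothesis iL : forall k x y, i (k *: x + y) = k *: i x + i y.
Hypothesis iI : injective i.
Hypothesis lL : forall k x y, lA (k *: x + y) = k * lA x + lA y.

Let G0 : set (V * 'F_2) := [set p | exists w, p = (i w, lA w)].
Let Q (H : set (V * 'F_2)) :=
  [/\ forall v k1 k2, H (v, k1) -> H (v, k2) -> k1 = k2,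
      forall v k w m, H (v, k) -> H (w, m) -> H (v + w, k + m)
    & G0 `<=` H].

Lemma i0 : i 0 = 0.
Proof.
have := iL 1 0 0; rewrite !scale1r addr0 => E.
by apply: (addrI (i 0)); rewrite addr0 -E.
Qed.

Lemma lA0 : lA 0 = 0.
Proof.
have := lL 1 0 0; rewrite !scale1r mul1r addr0 => E.
by apply: (addrI (lA 0)); rewrite addr0 -E.
Qed.

Lemma QG0 : Q G0.
Proof.
split.
- move=> v k1 k2 [w1 [-> ->]] [w2 [E ->]]; by rewrite (iI E).
- move=> v k w m [w1 [-> ->]] [w2 [-> ->]]; exists (w1 + w2).
  by have := iL 1 w1 w2; have := lL 1 w1 w2; rewrite !scale1r mul1r => -> ->.
- by [].
Qed.

Lemma ext_main : exists lB : V -> 'F_2,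
  (forall k x y, lB (k *: x + y) = k * lB x + lB y) /\ (forall w, lB (i w) = lA w).
Proof.
pose P (G : set (V * 'F_2)) := Q (G `|` G0).
have [G [PG maxG]] : exists A, P A /\ forall B, A `<` B -> ~ P B.
  apply: Zorn_bigcup => F FP Ftot.
  set U := (\bigcup_(X in F) X) `|` G0.
  have key : forall x y, U x -> U y -> exists H, [/\ Q H, H `<=` U, H x & H y].
    have QX : forall X, F X -> Q (X `|` G0) by move=> X /FP.
    have sX : forall X, F X -> X `|` G0 `<=` U.
      move=> X FX p [Xp|G0p]; [left; exists X|right] => //.
    move=> x y [[X FX Xx]|G0x] [[Y FY Yy]|G0y].
    - have [XY|YX] := Ftot X Y FX FY.
      + exists (Y `|` G0); split; [exact: QX|exact: sX|left; exact: XY|by left].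
      + exists (X `|` G0); split; [exact: QX|exact: sX|by left|left; exact: YX].
    - exists (X `|` G0); split; [exact: QX|exact: sX|by left|by right].
    - exists (Y `|` G0); split; [exact: QX|exact: sX|by right|by left].
    - exists G0; split; [exact: QG0| by move=> p; right|by []|by []].
  split.
  - move=> v k1 k2 U1 U2; have [H [[fH _ _] _ H1 H2]] := key _ _ U1 U2.
    exact: fH H1 H2.
  - move=> v k w m U1 U2; have [H [[_ aH _] sH H1 H2]] := key _ _ U1 U2.
    exact/sH/aH.
  - by move=> p; right.
have [fH aH gH] := PG.
set H := G `|` G0 in fH aH gH.
have H00 : H (0, 0) by apply: gH; exists 0; rewrite i0 lA0.
have full : forall v, exists k, H (v, k).
  move=> v; apply: contrapT => nv.
  have hv : forall k, ~ H (v, k) by move=> k Hk; apply: nv; exists k.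
  pose B := G `|` [set p | H (p.1 + v, p.2)].
  have GB : G `<` B.
    split; first by move=> p Gp; left.
    move=> BG; apply: (hv 0); left; apply: BG; right => /=.
    by rewrite F2_add_self.
  apply: (maxG B GB).
  have UE : forall p, (B `|` G0) p <-> H p \/ H (p.1 + v, p.2).
    move=> p; split.
    + by move=> [[Gp|Sp]|G0p]; [left; left|right|left; right].
    + by move=> [[Gp|G0p]|Sp]; [left; left|right|left; right].
  have cross : forall u k1 k2, H (u, k1) -> H (u + v, k2) -> False.
    move=> u k1 k2 h1 h2; apply: (hv (k1 + k2)).
    by have := aH _ _ _ _ h1 h2; rewrite addrA F2_add_self add0r.
  split.
  - move=> u k1 k2 /UE [h1|h1] /UE [h2|h2].
    + exact: fH h1 h2.
    + by case: (cross _ _ _ h1 h2).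
    + by case: (cross _ _ _ h2 h1).
    + exact: fH h1 h2.
  - move=> u k w m /UE [h1|h1] /UE [h2|h2]; apply/UE => /=.
    + by left; apply: aH.
    + by right; rewrite -addrA; apply: aH.
    + by right; rewrite addrAC; apply: aH.
    + left; have := aH _ _ _ _ h1 h2.
      by rewrite addrACA F2_add_self addr0.
  - by move=> p G0p; right.
pose lB v := projT1 (cid (full v)).
have HlB : forall v, H (v, lB v) by move=> v; exact: (projT2 (cid (full v))).
exists lB; split.
- move=> k x y; case: (F2_cases k) => ->.
  + by rewrite scale0r add0r mul0r add0r.
  + rewrite scale1r mul1r; apply: (fH (x + y)); first exact: HlB.
    exact: aH.
- move=> w; apply: (fH (i w)); first exact: HlB.
  by apply: gH; exists w.
Qed.
End Ext.

Local Close Scope classical_set_scope.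

Lemma dimA (a b p q : int) : (posD (a + p) (b + q) || negD (a + p) (b + q)) ->
  prodnz (- (a + p)) (-2 - (b + q)) a b = prodnz a b p q.
Proof. rewrite /prodnz /posD /negD. lia. Qed.
Lemma dimB (a b p q : int) : prodnz a b p q -> posD p q || negD p q.
Proof. rewrite /prodnz /posD /negD. lia. Qed.
Lemma dimC (a b p q : int) : prodnz a b p q -> posD (- (a + p)) (-2 - (b + q)) || negD (- (a + p)) (-2 - (b + q)).
Proof. rewrite /prodnz /posD /negD. lia. Qed.
Lemma dimD (p q : int) : posD p q || negD p q -> prodnz (-p) (-2 - q) p q.
Proof. rewrite /prodnz /posD /negD. lia. Qed.
Lemma dimE (p q : int) : prodnz (-p) (-2 - q) p q -> posD (-p) (-2 - q) || negD (-p) (-2 - q).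
Proof. rewrite /prodnz /posD /negD. lia. Qed.

Section Casts.
Lemma castM_irr (M : int -> int -> Type) p q p' q' (e1 e1' : p = p') (e2 e2' : q = q') (x : M p q) :
  castM e1 e2 x = castM e1' e2' x.
Proof. by rewrite (eq_irrelevance e1 e1') (eq_irrelevance e2 e2'). Qed.

Lemma castM_comp (M : int -> int -> Type) p q p' q' p'' q''
  (e1 : p' = p'') (e2 : q' = q'') (e3 : p = p') (e4 : q = q') (x : M p q) :
  castM e1 e2 (castM e3 e4 x) = castM (etrans e3 e1) (etrans e4 e2) x.
Proof. move: e1 e2; case: p' / e3; case: q' / e4 => e1 e2; exact: castM_irr. Qed.

Lemma castM_lin (M : int -> int -> lmodType 'F_2) p q p' q' (e1 : p = p') (e2 : q = q') k (x y : M p q) :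
  castM (M:=M) e1 e2 (k *: x + y) = k *: castM (M:=M) e1 e2 x + castM (M:=M) e1 e2 y.
Proof. by case: p' / e1; case: q' / e2. Qed.

Lemma castM_scale (M : int -> int -> lmodType 'F_2) p q p' q' (e1 : p = p') (e2 : q = q') k (x : M p q) :
  castM (M:=M) e1 e2 (k *: x) = k *: castM (M:=M) e1 e2 x.
Proof. by case: p' / e1; case: q' / e2. Qed.

Lemma castM_hom (M N : int -> int -> lmodType 'F_2) (f : forall p q, M p q -> N p q)
  p q p' q' (e1 : p = p') (e2 : q = q') (x : M p q) :
  f p' q' (castM (M:=M) e1 e2 x) = castM (M:=N) e1 e2 (f p q x).
Proof. by case: p' / e1; case: q' / e2. Qed.

Lemma coef_cast p q p' q' (e1 : p = p') (e2 : q = q') (x : M2 p q) :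
  coefM2 (castM (M:=M2) e1 e2 x) = coefM2 x.
Proof. by case: p' / e1; case: q' / e2. Qed.
End Casts.

Lemma coef_const p q (t : 'F_2) : coefM2 (const_mx t : M2 p q) = (dimM2 p q)%:R * t.
Proof.
rewrite /coefM2; under eq_bigr do rewrite mxE.
by rewrite sumr_const card_ord mulr_natl.
Qed.

Lemma coef_lin p q k (x y : M2 p q) : coefM2 (k *: x + y) = k * coefM2 x + coefM2 y.
Proof.
rewrite /coefM2 mulr_sumr -big_split /=; apply: eq_bigr => j _.
by rewrite !mxE.
Qed.

Lemma rv_small n (y : 'rV['F_2]_n) : (n <= 1)%N -> y = const_mx (\sum_j y 0 j).
Proof.
case: n y => [|[|//]] y _; apply/matrixP => i j.
- by case: j.
- by rewrite mxE big_ord1 !ord1.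
Qed.

Lemma const_eq n (t1 t2 : 'F_2) : (n <= 1)%N -> (n = 1%N -> t1 = t2) ->
  const_mx t1 = const_mx t2 :> 'rV['F_2]_n.
Proof.
case: n => [|[|//]] _ h; apply/matrixP => i j.
- by case: j.
- by rewrite !mxE h.
Qed.

Lemma dim_le1 p q : (dimM2 p q <= 1)%N.
Proof. by rewrite /dimM2; case: (_ || _). Qed.

Lemma dim1 p q : dimM2 p q = 1%N -> posD p q || negD p q.
Proof. by rewrite /dimM2; case: (_ || _). Qed.

Lemma dim1' p q : posD p q || negD p q -> dimM2 p q = 1%N.
Proof. by rewrite /dimM2 => ->. Qed.

Section MainSec.
Variables (B : bgmod) (l : B 0 (-2) -> 'F_2).
Hypothesis hl : forall k x y, l (k *: x + y) = k * l x + l y.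

Definition em a b : M2 a b := const_mx 1.

Definition Tv a b p q (x : B p q) : 'F_2 :=
  match a + p =P 0, b + q =P -2 with
  | ReflectT e1, ReflectT e2 => l (castM (M:=bg_carrier B) e1 e2 (bg_act B a b p q (em a b) x))
  | _, _ => 0 end.

Lemma l0 : l 0 = 0.
Proof.
have := hl 1 0 0; rewrite !scale1r mul1r addr0 => E.
by apply: (addrI (l 0)); rewrite addr0 -E.
Qed.

Lemma lscale k x : l (k *: x) = k * l x.
Proof. by have := hl k x 0; rewrite !addr0 l0 addr0. Qed.

Lemma TvE a b p q (x : B p q) (e1 : a + p = 0) (e2 : b + q = -2) :
  Tv a b x = l (castM (M:=bg_carrier B) e1 e2 (bg_act B a b p q (em a b) x)).
Proof.
rewrite /Tv; case: (a + p =P 0) => [e1'|//]; case: (b + q =P -2) => [e2'|//].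
congr (l _); exact: castM_irr.
Qed.

Lemma Tv0 a b p q (x : B p q) : ~ (a + p = 0 /\ b + q = -2) -> Tv a b x = 0.
Proof.
move=> h; rewrite /Tv; case: (a + p =P 0) => [e1|//]; case: (b + q =P -2) => [e2|//].
by case: h.
Qed.

Lemma Tv_lin a b p q k (x y : B p q) : Tv a b (k *: x + y) = k * Tv a b x + Tv a b y.
Proof.
have [ax1 [ax2 [ax3 [ax4 _]]]] := bg_axioms B.
case: (a + p =P 0) => [e1|n1]; first case: (b + q =P -2) => [e2|n2].
- by rewrite !(TvE _ e1 e2) ax2 ax4 castM_lin hl.
- by rewrite !Tv0 ?mulr0 ?addr0 // => -[].
- by rewrite !Tv0 ?mulr0 ?addr0 // => -[].
Qed.

Lemma Tv_cast a b a' b' p q (ea : a = a') (eb : b = b') (x : B p q) :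
  Tv a b x = Tv a' b' x.
Proof. by rewrite ea eb. Qed.

Lemma Tv_act c d a b p q (s : M2 a b) (x : B p q) :
  Tv c d (bg_act B a b p q s x)
  = (if prodnz c d a b then coefM2 (em c d) * coefM2 s else 0) * Tv (c + a) (d + b) x.
Proof.
have [_ [_ [ax3 [_ [_ ax6]]]]] := bg_axioms B.
case: (c + (a + p) =P 0) => [e1|n1]; last first.
  rewrite [LHS]Tv0; last by case.
  rewrite Tv0 ?mulr0 // => -[h _]; apply: n1; by rewrite addrA.
case: (d + (b + q) =P -2) => [e2|n2]; last first.
  rewrite [LHS]Tv0; last by case.
  rewrite Tv0 ?mulr0 // => -[_ h]; apply: n2; by rewrite addrA.
rewrite (TvE _ e1 e2) ax6 castM_comp /mulM2.
set K := (if _ then _ else _).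
have -> : const_mx K = K *: em (c + a) (d + b) :> M2 (c + a) (d + b).
  by apply/matrixP => i j; rewrite !mxE mulr1.
have E1 : c + a + p = 0 by rewrite -addrA.
have E2 : d + b + q = -2 by rewrite -addrA.
rewrite ax3 castM_scale lscale (TvE _ E1 E2); congr (_ * l _); exact: castM_irr.
Qed.

Definition gmap p q (x : B p q) : M2 p q := const_mx (Tv (- p) (-2 - q) x).

Lemma g_hom : is_bghom (bg_act B) M2act gmap.
Proof.
split.
- move=> p q k x y; rewrite /gmap Tv_lin; apply/matrixP => i j; by rewrite !mxE.
- move=> a b p q s x; rewrite /gmap Tv_act (@Tv_cast _ _ (- p) (-2 - q)); [|lia|lia].
  rewrite /M2act /mulM2 coef_const /em coef_const.
  apply: const_eq (dim_le1 _ _) _ => /dim1 H.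
  rewrite dimA //; case E: (prodnz a b p q); last by rewrite mul0r.
  rewrite (dim1' (dimC E)) (dim1' (dimB E)).
  by rewrite !mulr1n !mul1r.
Qed.
End MainSec.

Theorem proposition4p2 : bg_injective M2act.
Proof.
move=> A B i f [iL iH] iI [fL fH].
pose lA (a : A 0 (-2)) := coefM2 (f 0 (-2) a).
have lAL : forall k x y, lA (k *: x + y) = k * lA x + lA y.
  by move=> k x y; rewrite /lA fL coef_lin.
have [lB [lBL lBi]] := @ext_main _ _ (i 0 (-2)) lA (iL 0 (-2)) (iI 0 (-2)) lAL.
exists (gmap lB); split; first exact: (g_hom lBL).
move=> p q x; rewrite /gmap.
have E2 : -2 - q + q = -2 by rewrite subrK.
rewrite (TvE _ _ (addNr p) E2) -iH -(castM_hom i) lBi /lA.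
rewrite (castM_hom f) coef_cast fH /M2act /mulM2 coef_const /em coef_const.
rewrite {2}(rv_small (f p q x) (dim_le1 p q)); apply: const_eq (dim_le1 _ _) _ => /dim1 h.
rewrite (dimD h) (dim1' (dimE (dimD h))) addNr subrK.
have -> : dimM2 0 (-2) = 1%N by apply: dim1'; rewrite /posD /negD; lia.
by rewrite !mulr1n !mul1r.
Qed.
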